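(* Let $\mathsf{Ax}\subseteq\{\mathsf{N}_\Diamond,\mathsf{C}_\Diamond,\mathsf{I}_{\Diamond\Box}\}$. Then $\mathsf{CK}\oplus\mathsf{Ax}$ is a conservative extension of $\mathsf{CK}_\Box$ if and only if $\mathsf{N}_\Diamond\notin\mathsf{Ax}$ or $\mathsf{I}_{\Diamond\Box}\notin\mathsf{Ax}$.
   Context: Formulas: $\mathbf{L}$ is generated from a countably infinite set of propositional variables by $\varphi ::= p \mid \bot \mid \varphi\wedge\varphi \mid \varphi\vee\varphi \mid \varphi\to\varphi \mid \Box\varphi \mid \Diamond\varphi$. Axioms: $\mathsf{K}_\Box$: $\Box(\varphi\to\psi)\to(\Box\varphi\to\Box\psi)$; $\mathsf{K}_\Diamond$: $\Box(\varphi\to\psi)\to(\Diamond\varphi\to\Diamond\psi)$; $\mathsf{N}_\Diamond$: $\Diamond\bot\to\bot$; $\mathsf{C}_\Diamond$: $\Diamond(\varphi\vee\psi)\to\Diamond\varphi\vee\Diamond\psi$; $\mathsf{I}_{\Diamond\Box}$: $(\Diamond\varphi\to\Box\psi)\to\Box(\varphi\to\psi)$. For a set $\mathsf{Ax}$ of axioms, $\mathsf{CK}\oplus\mathsf{Ax}$ is the relation $\Gamma\vdash_{\mathsf{Ax}}\varphi$ inductively generated by: (Ax) $\Gamma\vdash\varphi$ whenever $\varphi$ is a substitution instance of an axiom of a standard Hilbert axiomatisation of intuitionistic propositional logic, of $\mathsf{K}_\Box$, of $\mathsf{K}_\Diamond$, or of an element of $\mathsf{Ax}$; (El) $\Gamma\vdash\varphi$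 if $\varphi\in\Gamma$; (MP) from $\Gamma\vdash\varphi$ and $\Gamma\vdash\varphi\to\psi$ infer $\Gamma\vdash\psi$; (Nec) from $\emptyset\vdash\varphi$ infer $\Gamma\vdash\Box\varphi$. A formula is derivable if $\emptyset\vdash_{\mathsf{Ax}}\varphi$. $\mathsf{CK}_\Box$ is the logic on $\Diamond$-free formulas axiomatised by intuitionistic propositional logic plus $\mathsf{K}_\Box$, closed under modus ponens and necessitation. A logic is a conservative extension of $\mathsf{CK}_\Box$ if its derivable $\Diamond$-free formulas are exactly the theorems of $\mathsf{CK}_\Box$. *)

(* Defs.v *)
Inductive form : Type :=
| Var : nat -> form
| Bot : form
| And : form -> form -> form
| Or  : form -> form -> form
| Imp : form -> form -> form
| Box : form -> form
| Dia : form -> form.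

Fixpoint dfree (f : form) : Prop :=
  match f with
  | Var _ | Bot => True
  | And a b | Or a b | Imp a b => dfree a /\ dfree b
  | Box a => dfree a
  | Dia _ => False
  end.

Inductive ipc_axiom : form -> Prop :=
| ipc_K  : forall a b, ipc_axiom (Imp a (Imp b a))
| ipc_S  : forall a b c,
    ipc_axiom (Imp (Imp a (Imp b c)) (Imp (Imp a b) (Imp a c)))
| ipc_andE1 : forall a b, ipc_axiom (Imp (And a b) a)
| ipc_andE2 : forall a b, ipc_axiom (Imp (And a b) b)
| ipc_andI  : forall a b, ipc_axiom (Imp a (Imp b (And a b)))
| ipc_orI1  : forall a b, ipc_axiom (Imp a (Or a b))
| ipc_orI2  : forall a b, ipc_axiom (Imp b (Or a b))
| ipc_orE   : forall a b c,
    ipc_axiom (Imp (Imp a c) (Imp (Imp b c) (Imp (Or a b) c)))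
| ipc_efq   : forall a, ipc_axiom (Imp Bot a).

Definition axK_box (a b : form) : form :=
  Imp (Box (Imp a b)) (Imp (Box a) (Box b)).
Definition axK_dia (a b : form) : form :=
  Imp (Box (Imp a b)) (Imp (Dia a) (Dia b)).
Definition axN_dia : form := Imp (Dia Bot) Bot.
Definition axC_dia (a b : form) : form :=
  Imp (Dia (Or a b)) (Or (Dia a) (Dia b)).
Definition axI_diabox (a b : form) : form :=
  Imp (Imp (Dia a) (Box b)) (Box (Imp a b)).

(* A subset Ax of {N_Dia, C_Dia, I_DiaBox}, given by membership flags. *)
Record axset : Type := mkAx { hasN : bool; hasC : bool; hasI : bool }.

Inductive ck_axiom (Ax : axset) : form -> Prop :=
| ck_ipc  : forall f, ipc_axiom f -> ck_axiom Ax f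
| ck_Kbox : forall a b, ck_axiom Ax (axK_box a b)
| ck_Kdia : forall a b, ck_axiom Ax (axK_dia a b)
| ck_N    : hasN Ax = true -> ck_axiom Ax axN_dia
| ck_C    : forall a b, hasC Ax = true -> ck_axiom Ax (axC_dia a b)
| ck_I    : forall a b, hasI Ax = true -> ck_axiom Ax (axI_diabox a b).

Definition emptyctx : form -> Prop := fun _ => False.

Inductive deriv (Ax : axset) : (form -> Prop) -> form -> Prop :=
| d_ax  : forall G f, ck_axiom Ax f -> deriv Ax G f
| d_el  : forall (G : form -> Prop) f, G f -> deriv Ax G f
| d_mp  : forall G f g, deriv Ax G f -> deriv Ax G (Imp f g) -> deriv Ax G g
| d_nec : forall G f, deriv Ax emptyctx f -> deriv Ax G (Box f).

Definition derivable (Ax : axset) (f : form) : Prop := deriv Ax emptyctx f.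

Inductive ckbox_thm : form -> Prop :=
| cb_ipc  : forall f, dfree f -> ipc_axiom f -> ckbox_thm f
| cb_Kbox : forall a b, dfree a -> dfree b -> ckbox_thm (axK_box a b)
| cb_mp   : forall f g, ckbox_thm f -> ckbox_thm (Imp f g) -> ckbox_thm g
| cb_nec  : forall f, ckbox_thm f -> ckbox_thm (Box f).

Definition conservative_over_CKbox (Ax : axset) : Prop :=
  forall f, dfree f -> (derivable Ax f <-> ckbox_thm f).

(* Main.v *)
Require Import Defs.

Inductive V3 := V0 | Vm | V1.
Definition rk (x : V3) : nat := match x with V0 => 0 | Vm => 1 | V1 => 2 end.
Definition vmeet x y := if Nat.leb (rk x) (rk y) then x else y.
Definition vjoin x y := if Nat.leb (rk x) (rk y) then y else x.
Definition vimp x y := if Nat.leb (rk x) (rk y) then V1 else y.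
Definition vbox x := match x with V1 => V1 | _ => Vm end.

Fixpoint ev (v : nat -> V3) (f : form) : V3 :=
  match f with
  | Var n => v n
  | Bot => V0
  | And a b => vmeet (ev v a) (ev v b)
  | Or a b => vjoin (ev v a) (ev v b)
  | Imp a b => vimp (ev v a) (ev v b)
  | Box a => vbox (ev v a)
  | Dia _ => V0
  end.

Lemma ck_sound f : ckbox_thm f -> forall v, ev v f = V1.
Proof.
  induction 1; intro v.
  - destruct H0; simpl;
      repeat match goal with |- context [ev v ?a] =>
        let e := fresh in destruct (ev v a) eqn:e end; reflexivity.
  - unfold axK_box; simpl; destruct (ev v a), (ev v b); reflexivity.
  - specialize (IHckbox_thm1 v); specialize (IHckbox_thm2 v); simpl in *.
    rewrite IHckbox_thm1 in IHckbox_thm2. destruct (ev v g); unfold vimp in *; simpl in *; congruence.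
  - simpl; rewrite IHckbox_thm; reflexivity.
Qed.

Definition Neg a := Imp a Bot.
Definition Top := Imp Bot Bot.
Definition badf := Imp (Neg (Neg (Box Bot))) (Box Bot).

Lemma badf_not : ~ ckbox_thm badf.
Proof. intro H. pose proof (ck_sound _ H (fun _ => V0)). simpl in H0. discriminate. Qed.

Lemma cbK a b : dfree a -> dfree b -> ckbox_thm b -> ckbox_thm (Imp a b).
Proof. intros. eapply cb_mp; [eassumption|]. apply cb_ipc; [simpl; tauto| constructor]. Qed.

Lemma cbI a : dfree a -> ckbox_thm (Imp a a).
Proof.
  intros.
  eapply cb_mp; [apply (cb_ipc (Imp a (Imp a a))); [simpl; tauto| constructor]|].
  eapply cb_mp; [apply (cb_ipc (Imp a (Imp (Imp a a) a))); [simpl; tauto| constructor]|].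
  apply cb_ipc; [simpl; tauto| constructor].
Qed.

Lemma cbS a b c : dfree a -> dfree b -> dfree c ->
  ckbox_thm (Imp a (Imp b c)) -> ckbox_thm (Imp a b) -> ckbox_thm (Imp a c).
Proof.
  intros. apply (cb_mp (Imp a b)); [assumption|]. apply (cb_mp (Imp a (Imp b c))); [assumption|].
  apply cb_ipc; [simpl; tauto| constructor].
Qed.

Lemma cbTrans a b c : dfree a -> dfree b -> dfree c ->
  ckbox_thm (Imp a b) -> ckbox_thm (Imp b c) -> ckbox_thm (Imp a c).
Proof.
  intros. apply cbS with b; auto. apply cbK; simpl; auto.
Qed.

Fixpoint tr (c : form) (f : form) : form :=
  match f with
  | Var n => Var n
  | Bot => Bot
  | And a b => And (tr c a) (tr c b)
  | Or a b => Or (tr c a) (tr c b)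
  | Imp a b => Imp (tr c a) (tr c b)
  | Box a => Box (tr c a)
  | Dia _ => c
  end.

Lemma tr_dfree c f : dfree c -> dfree (tr c f).
Proof. induction f; simpl; tauto. Qed.

Lemma tr_id c f : dfree f -> tr c f = f.
Proof. induction f; simpl; intros; try tauto; f_equal; tauto. Qed.

Lemma tr_ipc c f : ipc_axiom f -> ipc_axiom (tr c f).
Proof. destruct 1; simpl; constructor. Qed.

Lemma cons_gen Ax c : dfree c -> (forall f, ck_axiom Ax f -> ckbox_thm (tr c f)) ->
  forall G f, deriv Ax G f -> (forall g, ~ G g) -> ckbox_thm (tr c f).
Proof.
  intros Hc Hax G f D. induction D; intros HG.
  - auto.
  - exfalso; eapply HG; eauto.
  - eapply cb_mp; [apply IHD1; auto| apply IHD2; auto].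
  - simpl. apply cb_nec. apply IHD. intros g [].
Qed.

Lemma ck_to_deriv Ax f : ckbox_thm f -> derivable Ax f.
Proof.
  unfold derivable. induction 1.
  - apply d_ax, ck_ipc; auto.
  - apply d_ax, ck_Kbox.
  - eapply d_mp; [exact IHckbox_thm1| exact IHckbox_thm2].
  - apply d_nec; auto.
Qed.

Lemma conserv_of Ax c : dfree c -> (forall f, ck_axiom Ax f -> ckbox_thm (tr c f)) ->
  conservative_over_CKbox Ax.
Proof.
  intros Hc Hax f Hf. split.
  - intro D. rewrite <- (tr_id c f Hf). eapply cons_gen; eauto.
  - apply ck_to_deriv.
Qed.

Definition ext (G : form -> Prop) a := fun x => G x \/ x = a.

Lemma dI Ax G a : deriv Ax G (Imp a a).
Proof.
  apply (d_mp _ _ (Imp a (Imp a a))); [apply d_ax, ck_ipc, (ipc_K a a)|].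
  apply (d_mp _ _ (Imp a (Imp (Imp a a) a))); [apply d_ax, ck_ipc, (ipc_K a (Imp a a))|].
  apply d_ax, ck_ipc, ipc_S.
Qed.

Lemma dK Ax G a f : deriv Ax G f -> deriv Ax G (Imp a f).
Proof. intros. eapply d_mp; [eassumption|]. apply d_ax, ck_ipc, ipc_K. Qed.

Lemma dS Ax G a b c : deriv Ax G (Imp a (Imp b c)) -> deriv Ax G (Imp a b) -> deriv Ax G (Imp a c).
Proof.
  intros. apply (d_mp _ _ (Imp a b)); [assumption|]. apply (d_mp _ _ (Imp a (Imp b c))); [assumption|].
  apply d_ax, ck_ipc, ipc_S.
Qed.

Lemma ded_gen Ax G' f : deriv Ax G' f -> forall G a, (forall x, G' x -> G x \/ x = a) ->
  deriv Ax G (Imp a f).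
Proof.
  induction 1; intros G0 a0 Hs.
  - apply dK, d_ax; auto.
  - destruct (Hs _ H) as [H1|H1].
    + apply dK, d_el; auto.
    + subst; apply dI.
  - eapply dS; eauto.
  - apply dK, d_nec; auto.
Qed.

Lemma ded Ax G a f : deriv Ax (ext G a) f -> deriv Ax G (Imp a f).
Proof. intros; eapply ded_gen; eauto. Qed.

Lemma hyp Ax G a : deriv Ax (ext G a) a.
Proof. apply d_el; right; reflexivity. Qed.

Lemma weak Ax G f : deriv Ax G f -> forall G', (forall x, G x -> G' x) -> deriv Ax G' f.
Proof.
  induction 1; intros G' Hs.
  - apply d_ax; auto.
  - apply d_el; auto.
  - eapply d_mp; eauto.
  - apply d_nec; auto.
Qed.

Lemma wk Ax G a f : deriv Ax G f -> deriv Ax (ext G a) f.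
Proof. intros; eapply weak; eauto. intros; left; auto. Qed.

Lemma efq Ax G a : deriv Ax G Bot -> deriv Ax G a.
Proof. intros; eapply d_mp; eauto. apply d_ax, ck_ipc, ipc_efq. Qed.

Lemma dtop Ax G : deriv Ax G Top.
Proof. apply d_ax, ck_ipc, ipc_efq. Qed.

Lemma stepA Ax G : hasN Ax = true -> deriv Ax G (Imp (Box Bot) (Neg (Dia Top))).
Proof.
  intros HN. apply ded. apply ded.
  assert (H1 : deriv Ax (ext (ext G (Box Bot)) (Dia Top)) (Box (Imp Top Bot))).
  { eapply d_mp; [apply wk, hyp|].
    eapply d_mp; [apply d_nec, (d_ax _ _ _ (ck_ipc _ _ (ipc_K Bot Top)))|].
    apply d_ax, ck_Kbox. }
  eapply d_mp; [|apply d_ax, ck_N; auto].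
  eapply d_mp; [apply hyp|].
  eapply d_mp; [apply H1|]. apply d_ax, ck_Kdia.
Qed.

Lemma stepB Ax G : hasI Ax = true -> deriv Ax G (Imp (Neg (Dia Top)) (Box Bot)).
Proof.
  intros HI. apply ded.
  assert (H1 : deriv Ax (ext G (Neg (Dia Top))) (Box (Imp Top Bot))).
  { eapply d_mp; [|apply d_ax, ck_I; auto].
    apply ded. apply efq. eapply d_mp; [apply hyp|]. apply wk, hyp. }
  eapply d_mp; [apply H1|].
  eapply d_mp; [|apply d_ax, ck_Kbox].
  apply d_nec. apply ded. eapply d_mp; [apply dtop|]. apply hyp.
Qed.

Lemma bad_deriv Ax : hasN Ax = true -> hasI Ax = true -> derivable Ax badf.
Proof.
  intros HN HI. unfold derivable, badf. apply ded.
  eapply d_mp; [|apply stepB; auto].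
  apply ded.
  eapply d_mp; [|apply wk, hyp].
  apply ded.
  eapply d_mp; [apply wk, hyp|].
  eapply d_mp; [apply hyp|]. apply stepA; auto.
Qed.

Theorem mainTheorem13 (Ax : axset) :
  conservative_over_CKbox Ax <-> (hasN Ax = false \/ hasI Ax = false).
Proof.
  split.
  - intros Hc. destruct (hasN Ax) eqn:EN; [|left; reflexivity].
    destruct (hasI Ax) eqn:EI; [|right; reflexivity].
    exfalso. apply badf_not. apply (Hc badf); [simpl; tauto|].
    apply bad_deriv; auto.
  - intros [HN|HI].
    + apply conserv_of with Top; [simpl; tauto|].
      intros f Hf; destruct Hf.
      * apply cb_ipc; [apply tr_dfree; simpl; tauto| apply tr_ipc; auto].
      * apply cb_Kbox; apply tr_dfree; simpl; tauto.
      * simpl. apply cbK; [simpl; split; apply tr_dfree; simpl; tauto|simpl; tauto|].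
        apply cbI; simpl; tauto.
      * congruence.
      * simpl. apply cb_ipc; [simpl; tauto| constructor].
      * simpl. assert (Da := tr_dfree Top a). assert (Db := tr_dfree Top b).
        assert (dT : dfree Top) by (simpl; tauto).
        apply cbTrans with (Box (tr Top b)); simpl; try tauto.
        -- apply cbS with Top; simpl; try tauto.
           ++ apply cbI; simpl; tauto.
           ++ apply cbK; simpl; try tauto. apply cb_ipc; [simpl; tauto|constructor].
        -- eapply cb_mp; [apply cb_nec, cb_ipc; [|apply (ipc_K (tr Top b) (tr Top a))]|];
             [simpl; tauto|]. apply cb_Kbox; simpl; tauto.
    + apply conserv_of with Bot; [simpl; tauto|].
      intros f Hf; destruct Hf.
      * apply cb_ipc; [apply tr_dfree; simpl; tauto| apply tr_ipc; auto].
      * apply cb_Kbox; apply tr_dfree; simpl; tauto.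
      * simpl. apply cbK; [simpl; split; apply tr_dfree; simpl; tauto|simpl; tauto|].
        apply cbI; simpl; tauto.
      * simpl. apply cb_ipc; [simpl; tauto| constructor].
      * simpl. apply cb_ipc; [simpl; tauto| constructor].
      * congruence.
Qed.
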